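(* Let $X,Y$ be random variables on finite alphabets $\mathcal{X},\mathcal{Y}$ with $I(X;Y)=0$, and let $Z=(X,Y)$ (a random variable on $\mathcal{Z}=\mathcal{X}\times\mathcal{Y}$). Then $\operatorname{Red}(X,Y\to Z)=0$, where $\operatorname{Red}$ is the redundant information defined below.
   Context: For each $y\in\mathcal{Y}$ with $\Pr(Y=y)>0$, let $(A_y,B_y,C_y)$ be the random triple on $\mathcal{X}\times\mathcal{Y}\times\mathcal{Z}$ with $\Pr(A_y=x,B_y=y',C_y=z)=0$ if $\Pr(Z=z)=0$ and $\Pr(A_y=x,B_y=y',C_y=z)=\Pr(X=x,Y=y',Z=z)\Pr(Z=z\mid Y=y)/\Pr(Z=z)$ otherwise. The unique information is $\operatorname{Un}(X\to Z\mid Y)=\sum_{y:\Pr(Y=y)>0}\Pr(Y=y)\,I(A_y;C_y)$ and the redundant information is $\operatorname{Red}(X,Y\to Z)=I(X;Z)-\operatorname{Un}(X\to Z\mid Y)$, where $I$ is mutual information. *)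

(* Defs.v *)
From mathcomp Require Import all_boot all_order all_algebra.
From mathcomp Require Import reals exp.
Set Implicit Arguments. Unset Strict Implicit. Unset Printing Implicit Defensive.
Import Order.TTheory GRing.Theory Num.Theory.
Local Open Scope ring_scope.

Section InfoDefs.
Variable R : realType.

Definition is_pmf2 (A B : finType) (p : A -> B -> R) : Prop :=
  (forall a b, 0 <= p a b) /\ \sum_(a : A) \sum_(b : B) p a b = 1.

Definition MI (A B : finType) (p : A -> B -> R) : R :=
  \sum_(a : A) \sum_(b : B)
     (if 0 < p a b then
        p a b * ln (p a b / ((\sum_(b' : B) p a b') * (\sum_(a' : A) p a' b)))
      else 0).

Variables (X Y Z : finType) (P : X -> Y -> Z -> R).

Definition PrY (y : Y) : R := \sum_(x : X) \sum_(z : Z) P x y z.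
Definition PrZ (z : Z) : R := \sum_(x : X) \sum_(y : Y) P x y z.
Definition PrYZ (y : Y) (z : Z) : R := \sum_(x : X) P x y z.

Definition condZY (z : Z) (y : Y) : R := PrYZ y z / PrY y.

Definition triple_y (y : Y) (x : X) (y' : Y) (z : Z) : R :=
  if PrZ z == 0 then 0 else P x y' z * condZY z y / PrZ z.

Definition AC_y (y : Y) (x : X) (z : Z) : R := \sum_(y' : Y) triple_y y x y' z.

Definition Un : R := \sum_(y : Y | 0 < PrY y) PrY y * MI (AC_y y).

Definition IXZ : R := MI (fun x z => \sum_(y : Y) P x y z).

Definition Red : R := IXZ - Un.

End InfoDefs.

Definition pair_triple (R : realType) (X Y : finType) (p : X -> Y -> R)
  : X -> Y -> (X * Y)%type -> R :=
  fun x y z => if z == (x, y) then p x y else 0.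

(* Main.v *)
Require Import Defs.
From mathcomp Require Import all_boot all_order all_algebra.
From mathcomp Require Import reals exp.
From mathcomp Require Import ring lra.
Import Order.TTheory GRing.Theory Num.Theory.
Local Open Scope ring_scope.

Section S.
Variable R : realType.

Lemma sum_collapse (I : finType) (j : I) (F : I -> R) :
  (forall i, i != j -> F i = 0) -> \sum_i F i = F j.
Proof. by move=> H; rewrite (bigD1 j) //= big1 ?addr0. Qed.
Arguments sum_collapse {I}.

Lemma term_split (v s t : R) : 0 <= v -> (0 < v -> 0 < s /\ 0 < t) ->
  (if 0 < v then v * ln (v / (s * t)) else 0) = v * (ln v - ln s - ln t).
Proof.
move=> v0 H; case: ifPn => vp.
  have [sp tp] := H vp.
  rewrite ln_div ?posrE ?mulr_gt0 // lnM ?posrE //; ring.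
have -> : v = 0 by apply/eqP; rewrite eq_le v0 andbT leNgt.
by rewrite mul0r.
Qed.

Variables (X Y : finType) (p : X -> Y -> R).
Hypothesis hp : forall a b, 0 <= p a b.
Let pX x := \sum_y p x y.
Let q y := \sum_x p x y.

Lemma le_pX x y : p x y <= pX x.
Proof. by rewrite /pX (bigD1 y) //= lerDl sumr_ge0. Qed.
Lemma le_q x y : p x y <= q y.
Proof. by rewrite /q (bigD1 x) //= lerDl sumr_ge0. Qed.

Lemma sum_pair (F : X * Y -> R) : \sum_z F z = \sum_a \sum_b F (a, b).
Proof. by rewrite pair_big; apply: eq_bigr => -[]. Qed.

Lemma F1 y : PrY (pair_triple p) y = q y.
Proof.
apply: eq_bigr => x _; rewrite /pair_triple.
by rewrite (sum_collapse (x, y)) ?eqxx // => z /negbTE ->.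
Qed.

Lemma F2 a b : PrZ (pair_triple p) (a, b) = p a b.
Proof.
rewrite /PrZ (sum_collapse a) => [|x xa].
  by rewrite (sum_collapse b) /pair_triple ?eqxx // => y yb; rewrite xpair_eqE (eq_sym b) (negbTE yb) andbF.
by apply: big1 => y _; rewrite /pair_triple xpair_eqE eq_sym (negbTE xa).
Qed.

Lemma F3 y a b : PrYZ (pair_triple p) y (a, b) = if b == y then p a b else 0.
Proof.
rewrite /PrYZ (sum_collapse a) /pair_triple ?xpair_eqE ?eqxx //=.
  by case: eqP => // ->.
by move=> x xa; rewrite xpair_eqE eq_sym (negbTE xa).
Qed.

Lemma F4 y x a b : AC_y (pair_triple p) y x (a, b) = if (a == x) && (b == y) then p x y / q y else 0.
Proof.
rewrite /AC_y (sum_collapse b) => [|y' yb]; last first.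
  by rewrite /triple_y; case: ifP => // _; rewrite /pair_triple xpair_eqE (eq_sym b) (negbTE yb) andbF !mul0r.
rewrite /triple_y F2 /condZY F3 F1 /pair_triple xpair_eqE eqxx andbT.
have [->|ax] := eqVneq a x; last by case: ifP => // _; rewrite !mul0r.
have [eby|nby] := eqVneq b y; last first.
  rewrite andbF; case: ifP => _ //=.
  by ring.
rewrite eby andbT.
case: ifPn => [/eqP ->|pn]; first by rewrite mul0r.
by rewrite [p x y * _]mulrC mulfK.
Qed.

Lemma MI_pair (g : X -> X * Y -> R) : MI g = \sum_x \sum_a \sum_b
  (if 0 < g x (a, b) then g x (a, b) * ln (g x (a, b) / ((\sum_z g x z) * (\sum_x' g x' (a, b)))) else 0).
Proof. by rewrite /MI; apply: eq_bigr => x _; exact: sum_pair. Qed.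

Lemma MIp : MI p = \sum_x \sum_y p x y * (ln (p x y) - ln (pX x) - ln (q y)).
Proof.
apply: eq_bigr => x _; apply: eq_bigr => y _; apply: term_split => // h.
by split; apply: (lt_le_trans h); [apply: le_pX | apply: le_q].
Qed.

Lemma fE x a b : \sum_y pair_triple p x y (a, b) = if a == x then p x b else 0.
Proof.
rewrite (sum_collapse b) /pair_triple ?xpair_eqE ?eqxx ?andbT.
  by case: eqP => // ->.
by move=> y yb; rewrite xpair_eqE (eq_sym b) (negbTE yb) andbF.
Qed.

Lemma rowE x : \sum_z \sum_y pair_triple p x y z = pX x.
Proof.
rewrite sum_pair (sum_collapse x) => [|a ax].
  by apply: eq_bigr => b _; rewrite fE eqxx.
by apply: big1 => b _; rewrite fE (negbTE ax).
Qed.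

Lemma colE a b : \sum_x' \sum_y pair_triple p x' y (a, b) = p a b.
Proof.
rewrite (sum_collapse a) => [|x xa]; first by rewrite fE eqxx.
by rewrite fE eq_sym (negbTE xa).
Qed.

Lemma IXZE : IXZ (pair_triple p) = \sum_x \sum_y p x y * (- ln (pX x)).
Proof.
rewrite /IXZ MI_pair; apply: eq_bigr => x _.
rewrite (sum_collapse x) => [|a ax]; last first.
  by apply: big1 => b _; rewrite fE (negbTE ax) ltxx.
apply: eq_bigr => b _; rewrite rowE colE fE eqxx term_split //; first by ring.
by move=> h; split => //; apply: (lt_le_trans h); apply: le_pX.
Qed.

Lemma rowAC y x : \sum_z AC_y (pair_triple p) y x z = p x y / q y.
Proof.
rewrite sum_pair (sum_collapse x) => [|a ax].
  rewrite (sum_collapse y) => [|b yb]; first by rewrite F4 !eqxx.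
  by rewrite F4 (negbTE yb) andbF.
by apply: big1 => b _; rewrite F4 (negbTE ax).
Qed.

Lemma colAC y x : \sum_x' AC_y (pair_triple p) y x' (x, y) = p x y / q y.
Proof.
rewrite (sum_collapse x) => [|a ax]; first by rewrite F4 !eqxx.
by rewrite F4 eq_sym (negbTE ax).
Qed.

Lemma MIAC y : 0 < q y -> q y * MI (AC_y (pair_triple p) y) =
   \sum_x p x y * (ln (q y) - ln (p x y)).
Proof.
move=> qp; rewrite MI_pair mulr_sumr; apply: eq_bigr => x _.
rewrite (sum_collapse x) => [|a ax]; last first.
  by apply: big1 => b _; rewrite F4 (negbTE ax) ltxx.
rewrite (sum_collapse y) => [|b yb]; last by rewrite F4 (negbTE yb) andbF ltxx.
rewrite rowAC colAC F4 !eqxx /= term_split //; last first.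
  by apply: divr_ge0 => //; apply: ltW.
have [p0|pp] := eqVneq (p x y) 0.
  by rewrite p0; ring.
have ppos : 0 < p x y by rewrite lt_neqAle eq_sym pp hp.
rewrite ln_div ?posrE //; field.
by rewrite gt_eqF.
Qed.

Lemma UnE : Un (pair_triple p) = \sum_x \sum_y p x y * (ln (q y) - ln (p x y)).
Proof.
rewrite /Un big_mkcond exchange_big; apply: eq_bigr => y _; rewrite F1.
case: ifPn => [qp|qn]; first by rewrite MIAC.
have q0 : q y = 0 by apply/eqP; rewrite eq_le sumr_ge0 ?andbT // ?leNgt.
symmetry; apply: big1 => x _.
have : p x y = 0.
  by apply/eqP; rewrite eq_le hp andbT -q0 le_q.
by move=> ->; rewrite mul0r.
Qed.
End S.

Theorem lemma10 (R : realType) (X Y : finType) (p : X -> Y -> R) :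
  is_pmf2 p -> MI p = 0 -> Red (pair_triple p) = 0.
Proof.
move=> [hp _] <-; rewrite /Red IXZE // UnE // MIp // -sumrB.
apply: eq_bigr => x _; rewrite -sumrB; apply: eq_bigr => y _; ring.
Qed.
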